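(* Let $R$ be a complete discrete valuation ring of equal characteristic with maximal ideal $\mathfrak{p}$ and finite residue field $k=R/\mathfrak{p}$ with $|k|>9$, and let $n\ge2$. Then every closed normal subgroup $H$ of $\mathrm{SL}_n(R)$ whose image in $\mathrm{SL}_n(k)$ is all of $\mathrm{SL}_n(k)$ is equal to $\mathrm{SL}_n(R)$.
   Context: The topology on $\mathrm{SL}_n(R)$ is the one induced by $R$. *)

(* Defs.v *)
From HB Require Import structures.
From mathcomp Require Import all_boot all_order all_algebra.
Set Implicit Arguments. Unset Strict Implicit. Unset Printing Implicit Defensive.
Import GRing.Theory.
Local Open Scope ring_scope.

Definition pdvd (R : comNzRingType) (pi : R) (m : nat) (x : R) : Prop :=
  exists c : R, x = pi ^+ m * c.

Definition DVR_uniformizer (R : idomainType) (pi : R) : Prop :=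
  [/\ pi != 0, pi \isn't a GRing.unit &
      forall x : R, x != 0 -> exists (m : nat) (u : R), u \is a GRing.unit /\ x = u * pi ^+ m].

Definition padic_complete (R : idomainType) (pi : R) : Prop :=
  forall a : nat -> R,
    (forall m, exists N, forall i j, (N <= i)%N -> (N <= j)%N -> pdvd pi m (a i - a j)) ->
    exists l : R, forall m, exists N, forall i, (N <= i)%N -> pdvd pi m (a i - l).

Definition SLmx (R : comUnitRingType) (n : nat) : pred 'M[R]_n :=
  fun A => \det A == 1.

Definition normal_subgroup_SL (R : comUnitRingType) (n : nat) (H : 'M[R]_n -> Prop) : Prop :=
  [/\ (forall A, H A -> SLmx A),
      H 1%:M,
      (forall A B, H A -> H B -> H (A *m B)),
      (forall A, H A -> H (invmx A)) &
      (forall g A, SLmx g -> H A -> H (g *m A *m invmx g))].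

(* H is closed in SL_n(R) for the topology induced by the pi-adic topology of R:
   every A in SL_n(R) all of whose basic neighbourhoods
   {B | B = A entrywise mod p^m} meet H lies in H. *)
Definition SL_closed (R : comUnitRingType) (pi : R) (n : nat) (H : 'M[R]_n -> Prop) : Prop :=
  forall A : 'M[R]_n, SLmx A ->
    (forall m : nat, exists B, H B /\ forall i j, pdvd pi m (B i j - A i j)) ->
    H A.

(* Main.v *)
Require Import Defs.
From HB Require Import structures.
From mathcomp Require Import all_boot all_order all_algebra all_field.
From mathcomp Require Import ring.
Set Implicit Arguments. Unset Strict Implicit. Unset Printing Implicit Defensive.
Import GRing.Theory.
Local Open Scope ring_scope.

Lemma pdvd0 (R : comNzRingType) (pi : R) m : pdvd pi m 0.
Proof. by exists 0; rewrite mulr0. Qed.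
Lemma pdvdD (R : comNzRingType) (pi : R) m x y :
  pdvd pi m x -> pdvd pi m y -> pdvd pi m (x + y).
Proof. by move=> [a ->] [b ->]; exists (a + b); rewrite mulrDr. Qed.
Lemma pdvdN (R : comNzRingType) (pi : R) m x : pdvd pi m x -> pdvd pi m (- x).
Proof. by move=> [a ->]; exists (- a); rewrite mulrN. Qed.
Lemma pdvdB (R : comNzRingType) (pi : R) m x y :
  pdvd pi m x -> pdvd pi m y -> pdvd pi m (x - y).
Proof. by move=> hx hy; apply: pdvdD => //; apply: pdvdN. Qed.
Lemma pdvdMr (R : comNzRingType) (pi : R) m x y : pdvd pi m x -> pdvd pi m (x * y).
Proof. by move=> [a ->]; exists (a * y); rewrite mulrA. Qed.
Lemma pdvdMl (R : comNzRingType) (pi : R) m x y : pdvd pi m x -> pdvd pi m (y * x).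
Proof. by rewrite mulrC; apply: pdvdMr. Qed.
Lemma pdvdMM (R : comNzRingType) (pi : R) m1 m2 x y :
  pdvd pi m1 x -> pdvd pi m2 y -> pdvd pi (m1 + m2) (x * y).
Proof. by move=> [a ->] [b ->]; exists (a * b); rewrite exprD; ring. Qed.
Lemma pdvdW (R : comNzRingType) (pi : R) m m' x :
  (m' <= m)%N -> pdvd pi m x -> pdvd pi m' x.
Proof.
by move=> hm [a ->]; exists (pi ^+ (m - m') * a); rewrite mulrA -exprD subnKC.
Qed.
Lemma pdvdX (R : comNzRingType) (pi : R) m c : pdvd pi m (pi ^+ m * c).
Proof. by exists c. Qed.

Definition mxd (R : comNzRingType) (pi : R) n (m : nat) (A : 'M[R]_n) :=
  forall i j, pdvd pi m (A i j).

Lemma mxd0 (R : comNzRingType) (pi : R) n m : mxd pi m (0 : 'M[R]_n).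
Proof. by move=> i j; rewrite mxE; apply: pdvd0. Qed.
Lemma mxdD (R : comNzRingType) (pi : R) n m (A B : 'M[R]_n) :
  mxd pi m A -> mxd pi m B -> mxd pi m (A + B).
Proof. by move=> hA hB i j; rewrite mxE; apply: pdvdD. Qed.
Lemma mxdN (R : comNzRingType) (pi : R) n m (A : 'M[R]_n) :
  mxd pi m A -> mxd pi m (- A).
Proof. by move=> hA i j; rewrite mxE; apply: pdvdN. Qed.
Lemma mxdB (R : comNzRingType) (pi : R) n m (A B : 'M[R]_n) :
  mxd pi m A -> mxd pi m B -> mxd pi m (A - B).
Proof. by move=> hA hB; apply: mxdD => //; apply: mxdN. Qed.
Lemma mxdW (R : comNzRingType) (pi : R) n m m' (A : 'M[R]_n) :
  (m' <= m)%N -> mxd pi m A -> mxd pi m' A.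
Proof. by move=> hm hA i j; apply: pdvdW (hA i j). Qed.
Lemma mxdMl (R : comNzRingType) (pi : R) n m (A B : 'M[R]_n) :
  mxd pi m A -> mxd pi m (B *m A).
Proof.
move=> hA i j; rewrite mxE; apply: (big_ind (pdvd pi m)).
- exact: pdvd0.
- exact: pdvdD.
- by move=> k _; apply: pdvdMl.
Qed.
Lemma mxdMr (R : comNzRingType) (pi : R) n m (A B : 'M[R]_n) :
  mxd pi m A -> mxd pi m (A *m B).
Proof.
move=> hA i j; rewrite mxE; apply: (big_ind (pdvd pi m)).
- exact: pdvd0.
- exact: pdvdD.
- by move=> k _; apply: pdvdMr.
Qed.
Lemma mxdMM (R : comNzRingType) (pi : R) n m1 m2 (A B : 'M[R]_n) :
  mxd pi m1 A -> mxd pi m2 B -> mxd pi (m1 + m2) (A *m B).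
Proof.
move=> hA hB i j; rewrite mxE; apply: (big_ind (pdvd pi (m1 + m2))).
- exact: pdvd0.
- exact: pdvdD.
- by move=> k _; apply: pdvdMM.
Qed.
Lemma mxdZ (R : comNzRingType) (pi : R) n m c (A : 'M[R]_n) :
  mxd pi m A -> mxd pi m (c *: A).
Proof. by move=> hA i j; rewrite mxE; apply: pdvdMl. Qed.
Lemma mxdX (R : comNzRingType) (pi : R) n m (A : 'M[R]_n) :
  mxd pi m (pi ^+ m *: A).
Proof. by move=> i j; rewrite mxE; apply: pdvdX. Qed.
Lemma mxdX1 (R : comNzRingType) (pi : R) n m (A : 'M[R]_n) :
  mxd pi 1 A -> mxd pi m.+1 (pi ^+ m *: A).
Proof.
move=> hA i j; rewrite mxE -addn1; apply: pdvdMM => //.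
by exists 1; rewrite mulr1.
Qed.

Lemma mxc_trans (R : comNzRingType) (pi : R) n m (A B C : 'M[R]_n) :
  mxd pi m (A - B) -> mxd pi m (B - C) -> mxd pi m (A - C).
Proof.
by move=> h1 h2; have := mxdD h1 h2; rewrite addrA subrK.
Qed.
Lemma mxc_sym (R : comNzRingType) (pi : R) n m (A B : 'M[R]_n) :
  mxd pi m (A - B) -> mxd pi m (B - A).
Proof. by move=> h; have := mxdN h; rewrite opprB. Qed.
Lemma mxc_add (R : comNzRingType) (pi : R) n m (A A' B B' : 'M[R]_n) :
  mxd pi m (A - A') -> mxd pi m (B - B') -> mxd pi m ((A + B) - (A' + B')).
Proof.
move=> h1 h2; have := mxdD h1 h2.
by rewrite opprD addrACA.
Qed.
Lemma mxc_mul (R : comNzRingType) (pi : R) n m (A A' B B' : 'M[R]_n) :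
  mxd pi m (A - A') -> mxd pi m (B - B') -> mxd pi m (A *m B - A' *m B').
Proof.
move=> h1 h2.
have -> : A *m B - A' *m B' = (A - A') *m B + A' *m (B - B').
  by rewrite mulmxBl mulmxBr addrA subrK.
by apply: mxdD; [apply: mxdMr | apply: mxdMl].
Qed.

Lemma det_cong (R : comNzRingType) (pi : R) n m (A B : 'M[R]_n) :
  mxd pi m (A - B) -> pdvd pi m (\det A - \det B).
Proof.
move=> h; rewrite /determinant.
pose K := fun x y : R => pdvd pi m (x - y).
have KM : forall x y x' y', K x x' -> K y y' -> K (x * y) (x' * y').
  move=> x y x' y' h1 h2; rewrite /K.
  have -> : x * y - x' * y' = (x - x') * y + x' * (y - y') by ring.
  by apply: pdvdD; [apply: pdvdMr | apply: pdvdMl].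
apply: (big_ind2 K).
- by rewrite /K subrr; apply: pdvd0.
- move=> x x' y y' h1 h2; rewrite /K.
  have -> : x + y - (x' + y') = (x - x') + (y - y') by ring.
  exact: pdvdD.
move=> s _; apply: (KM); first by rewrite /K subrr; apply: pdvd0.
apply: (big_ind2 K).
- by rewrite /K subrr; apply: pdvd0.
- by move=> ? ? ? ?; apply: KM.
by move=> i _; have := h i (perm.fun_of_perm s i); rewrite !mxE.
Qed.

Lemma SL_unit (R : idomainType) n (A : 'M[R]_n) : SLmx A -> A \in unitmx.
Proof. by rewrite /SLmx unitmxE => /eqP ->; apply: unitr1. Qed.
Lemma SL_mul (R : idomainType) n (A B : 'M[R]_n) : SLmx A -> SLmx B -> SLmx (A *m B).
Proof. by rewrite /SLmx det_mulmx => /eqP -> /eqP ->; rewrite mulr1. Qed.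
Lemma SL_inv (R : idomainType) n (A : 'M[R]_n) : SLmx A -> SLmx (invmx A).
Proof. by rewrite /SLmx det_inv => /eqP ->; rewrite invr1. Qed.

Lemma inv_approx (R : idomainType) (pi : R) n M (h V : 'M[R]_n) :
  (0 < M)%N -> SLmx h -> mxd pi M.+1 (h - (1%:M + pi ^+ M *: V)) ->
  mxd pi M.+1 (invmx h - (1%:M - pi ^+ M *: V)).
Proof.
move=> M0 hh hE.
set W := pi ^+ M *: V.
set E := h - (1%:M + W) in hE.
have e1 : (1%:M + W) *m (1%:M - W) = 1%:M - W *m W.
  by rewrite mulmxDl mul1mx mulmxBr mulmx1 addrA subrK.
have e2 : W *m W - E *m (1%:M - W) = 1%:M - h *m (1%:M - W).
  by rewrite /E mulmxBl e1 opprB addrA (addrC (W *m W)) subrK.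
have -> : invmx h - (1%:M - W) = invmx h *m (W *m W - E *m (1%:M - W)).
  by rewrite e2 mulmxBr mulmx1 mulmxA mulVmx ?SL_unit // mul1mx.
apply: mxdMl; apply: mxdB; last by apply: mxdMr.
apply: (@mxdW _ _ _ (M + M)); first by rewrite -addn1 leq_add2l.
by apply: mxdMM; apply: mxdX.
Qed.

Lemma inv_cong (R : idomainType) (pi : R) n M (B g : 'M[R]_n) :
  SLmx B -> SLmx g -> mxd pi M (B - g) -> mxd pi M (invmx B - invmx g).
Proof.
move=> hB hg h.
have -> : invmx B - invmx g = invmx g *m (g - B) *m invmx B.
  rewrite mulmxBr mulmxBl mulVmx ?SL_unit // mul1mx -mulmxA mulmxV ?SL_unit //.
  by rewrite mulmx1.
apply: mxdMr; apply: mxdMl; have := mxdN h; by rewrite opprB.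
Qed.

Lemma comm_lemma (R : idomainType) (pi : R) n (H : 'M[R]_n -> Prop) M (g Y : 'M[R]_n) :
  normal_subgroup_SL H -> (0 < M)%N ->
  (forall A, SLmx A -> exists B, H B /\ mxd pi M (B - A)) ->
  SLmx g -> SLmx (1%:M + pi ^+ M *: Y) ->
  exists h, H h /\ mxd pi M.+1 (h - (1%:M + pi ^+ M *: (g *m Y *m invmx g - Y))).
Proof.
case=> hSL h1 hmul hinv hconj M0 hP hg hu.
set u := 1%:M + pi ^+ M *: Y in hu *.
have [B [HB hB]] := hP g hg.
have SB := hSL B HB.
exists (B *m (u *m invmx B *m invmx u)); split.
  by apply: hmul => //; apply: hconj => //; apply: hinv.
set a := pi ^+ M.
have hinvu : mxd pi M.+1 (invmx u - (1%:M - a *: Y)).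
  by apply: inv_approx => //; rewrite subrr; apply: mxd0.
set Z := B *m Y *m invmx B.
have eqBu : B *m u *m invmx B = 1%:M + a *: Z.
  by rewrite /u mulmxDr mulmx1 -scalemxAr mulmxDl -scalemxAl mulmxV ?SL_unit.
rewrite !mulmxA eqBu.
apply: (@mxc_trans _ _ _ _ _ ((1%:M + a *: Z) *m (1%:M - a *: Y))).
  by apply: mxc_mul => //; rewrite subrr; apply: mxd0.
set G := g *m Y *m invmx g.
have -> : (1%:M + a *: Z) *m (1%:M - a *: Y) - (1%:M + a *: (G - Y)) =
          a *: (Z - G) - (a *: Z) *m (a *: Y).
  rewrite mulmxDl mul1mx mulmxBr mulmx1.
  set P := (a *: Z) *m (a *: Y); clearbody P.
  apply/matrixP => i j; rewrite !mxE; ring.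
apply: mxdB.
  apply: mxdX1; apply: (@mxdW _ _ _ M) => //.
  by apply: mxc_mul; [apply: mxc_mul => //; rewrite subrr; apply: mxd0|apply: inv_cong].
apply: (@mxdW _ _ _ (M + M)); first by rewrite -addn1 leq_add2l.
by apply: mxdMM; apply: mxdX.
Qed.

Lemma det_elem (R : idomainType) n (i j : 'I_n) (c : R) :
  i != j -> \det (1%:M + c *: delta_mx i j) = 1.
Proof.
move=> hij.
have key : forall (A : 'M[R]_n), is_trig_mx A -> (forall k, A k k = 1) -> \det A = 1.
  by move=> A hA hd; rewrite det_trig // big1.
have diag : forall k, (1%:M + c *: delta_mx i j) k k = 1.
  move=> k; rewrite !mxE eqxx mulr1n.
  case hk: (k == i); case hk2: (k == j); rewrite /= ?mulr0 ?addr0 //.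
  by move/eqP: hk hk2 => -> /eqP e; rewrite e eqxx in hij.
case: (ltngtP i j) => hlt; last by move/val_inj: hlt => hh; rewrite hh eqxx in hij.
- rewrite -det_tr; apply: key; last by move=> k; rewrite mxE diag.
  apply/forallP => k; apply/forallP => l; apply/implyP => hkl; rewrite !mxE.
  have -> : (l == k) = false by apply/eqP => e; rewrite e ltnn in hkl.
  rewrite /= add0r; apply/eqP.
  case hl: (l == i); case hk: (k == j); rewrite /= ?mulr0 //.
  move/eqP: hl hk => hl /eqP hk; rewrite hl hk in hkl.
  by have := ltn_trans hkl hlt; rewrite ltnn.
- apply: key; last by [].
  apply/forallP => k; apply/forallP => l; apply/implyP => hkl; rewrite !mxE.
  have -> : (k == l) = false by apply/eqP => e; rewrite e ltnn in hkl.
  rewrite /= add0r; apply/eqP.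
  case hl: (k == i); case hk: (l == j); rewrite /= ?mulr0 //.
  move/eqP: hl hk => hl /eqP hk; rewrite hl hk in hkl.
  by have := ltn_trans hkl hlt; rewrite ltnn.
Qed.

Lemma det_diag1 (R : idomainType) n (l : 'I_n) (s : R) :
  \det (1%:M + s *: delta_mx l l) = 1 + s.
Proof.
rewrite det_trig; last first.
  apply/forallP => k; apply/forallP => m; apply/implyP => hkl; rewrite !mxE.
  have -> : (k == m) = false by apply/eqP => e; rewrite e ltnn in hkl.
  rewrite /= add0r; apply/eqP.
  case: (k =P l) => [hk|] /=; last by rewrite mulr0.
  case: (m =P l) => [hm|] /=; last by rewrite mulr0.
  by rewrite hk hm ltnn in hkl.
rewrite (bigD1 l) //= big1 ?mulr1; first by rewrite !mxE !eqxx mulr1n mulr1.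
by move=> k hk; rewrite !mxE eqxx mulr1n (negbTE hk) mulr0 addr0.
Qed.

Definition Sset (R : idomainType) (pi : R) n (H : 'M[R]_n -> Prop) M (Y : 'M[R]_n) :=
  exists h, H h /\ mxd pi M.+1 (h - (1%:M + pi ^+ M *: Y)).

Lemma S0 (R : idomainType) (pi : R) n (H : 'M[R]_n -> Prop) M :
  normal_subgroup_SL H -> Sset pi H M 0.
Proof.
case=> _ h1 _ _ _; exists 1%:M; split => //.
by rewrite scaler0 addr0 subrr; apply: mxd0.
Qed.

Lemma SD (R : idomainType) (pi : R) n (H : 'M[R]_n -> Prop) M Y1 Y2 :
  normal_subgroup_SL H -> (0 < M)%N -> Sset pi H M Y1 -> Sset pi H M Y2 ->
  Sset pi H M (Y1 + Y2).
Proof.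
case=> _ _ hmul _ _ M0 [h1 [H1 e1]] [h2 [H2 e2]].
exists (h1 *m h2); split; first by apply: hmul.
apply: mxc_trans; first by apply: mxc_mul e1 e2.
have -> : (1%:M + pi ^+ M *: Y1) *m (1%:M + pi ^+ M *: Y2) -
   (1%:M + pi ^+ M *: (Y1 + Y2)) = (pi ^+ M *: Y1) *m (pi ^+ M *: Y2).
  rewrite mulmxDl !mulmxDr !mul1mx !mulmx1.
  set P := (pi ^+ M *: Y1) *m (pi ^+ M *: Y2); clearbody P.
  apply/matrixP => i j; rewrite !mxE; ring.
apply: (@mxdW _ _ _ (M + M)); first by rewrite -addn1 leq_add2l.
by apply: mxdMM; apply: mxdX.
Qed.

Lemma Scong (R : idomainType) (pi : R) n (H : 'M[R]_n -> Prop) M Y Y' :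
  Sset pi H M Y -> mxd pi 1 (Y' - Y) -> Sset pi H M Y'.
Proof.
move=> [h [Hh e]] hY; exists h; split => //.
have -> : h - (1%:M + pi ^+ M *: Y') =
    (h - (1%:M + pi ^+ M *: Y)) - pi ^+ M *: (Y' - Y).
  apply/matrixP => i j; rewrite !mxE; ring.
by apply: mxdB => //; apply: mxdX1.
Qed.

Lemma Ssum (R : idomainType) (pi : R) n (H : 'M[R]_n -> Prop) M (I : Type)
    (r : seq I) (P : pred I) (F : I -> 'M[R]_n) :
  normal_subgroup_SL H -> (0 < M)%N -> (forall i, P i -> Sset pi H M (F i)) ->
  Sset pi H M (\sum_(i <- r | P i) F i).
Proof.
move=> hH M0 hF; apply: (big_ind (Sset pi H M)) => //.
- exact: S0.
- by move=> x y; apply: SD.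
Qed.

Lemma Soff (R : idomainType) (pi : R) n (H : 'M[R]_n -> Prop) M (mu : R) :
  normal_subgroup_SL H -> (0 < M)%N ->
  (forall A, SLmx A -> exists B, H B /\ mxd pi M (B - A)) ->
  mu \is a GRing.unit -> (mu ^+ 2 - 1) \is a GRing.unit ->
  forall (i j : 'I_n) c, i != j -> Sset pi H M (c *: delta_mx i j).
Proof.
move=> hH M0 hP hmu hmu2 i j c hij.
pose d := \row_(k < n) (if k == i then mu else if k == j then mu^-1 else 1).
pose d' := \row_(k < n) (if k == i then mu^-1 else if k == j then mu else 1).
pose g := diag_mx d; pose gi := diag_mx d'.
have hji : (j == i) = false by apply/eqP => e; rewrite e eqxx in hij.
have hgg : g *m gi = 1%:M.
  apply/matrixP => k l; rewrite mul_diag_mx !mxE.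
  case: (k == l); last by rewrite mulr0n mulr0.
  rewrite mulr1n.
  case: (k == i); first by rewrite mulrV.
  case: (k == j); first by rewrite mulVr.
  by rewrite mulr1.
have hg : SLmx g.
  rewrite /SLmx det_diag (bigD1 i) //=; apply/eqP.
  rewrite (bigD1 j) /=; last by rewrite hji.
  rewrite big1 => [|k /andP [hki hkj]]; last by rewrite mxE (negbTE hki) (negbTE hkj).
  by rewrite !mxE eqxx hji eqxx mulr1 mulrV.
have hgi : invmx g = gi.
  by rewrite -[invmx g]mulmx1 -hgg mulmxA mulVmx ?SL_unit // mul1mx.
pose c' := c * (mu ^+ 2 - 1)^-1.
have hu : SLmx (1%:M + pi ^+ M *: (c' *: delta_mx i j)).
  by rewrite /SLmx scalerA det_elem.
have [h [Hh e]] := comm_lemma hH M0 hP hg hu.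
exists h; split => //.
suff -> : c *: delta_mx i j = g *m (c' *: delta_mx i j) *m invmx g - c' *: delta_mx i j by [].
rewrite hgi; apply/matrixP => k l; rewrite mul_mx_diag mul_diag_mx !mxE.
case hk: (k == i); case hl: (l == j); rewrite /= ?mulr0 ?mul0r ?subr0 //.
move/eqP: hk hl => hk /eqP hl; subst k l; rewrite hji !mulr1.
have -> : mu * c' * mu - c' = c' * (mu ^+ 2 - 1) by ring.
by rewrite /c' -mulrA mulVr ?mulr1.
Qed.

Lemma Sdiag (R : idomainType) (pi : R) n (H : 'M[R]_n -> Prop) M (mu : R) :
  normal_subgroup_SL H -> (0 < M)%N ->
  (forall A, SLmx A -> exists B, H B /\ mxd pi M (B - A)) ->
  mu \is a GRing.unit -> (mu ^+ 2 - 1) \is a GRing.unit ->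
  forall (i j : 'I_n) c, i != j ->
  Sset pi H M (c *: (delta_mx i i - delta_mx j j)).
Proof.
move=> hH M0 hP hmu hmu2 i j c hij.
have hji : j != i by rewrite eq_sym.
pose g : 'M[R]_n := 1%:M + delta_mx i j.
pose gi : 'M[R]_n := 1%:M - delta_mx i j.
have hgg : g *m gi = 1%:M.
  rewrite /g /gi mulmxDl mul1mx mulmxBr mulmx1 mul_delta_mx_0 //.
  by rewrite subr0 subrK.
have hg : SLmx g by rewrite /SLmx /g -[delta_mx i j]scale1r det_elem.
have hgi : invmx g = gi.
  by rewrite -[invmx g]mulmx1 -hgg mulmxA mulVmx ?SL_unit // mul1mx.
have hu : SLmx (1%:M + pi ^+ M *: (c *: delta_mx j i)).
  by rewrite /SLmx scalerA det_elem.
have [h [Hh e]] := comm_lemma hH M0 hP hg hu.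
have eq : c *: (delta_mx i i - delta_mx j j) =
   (g *m (c *: delta_mx j i) *m invmx g - c *: delta_mx j i) + c *: delta_mx i j.
  rewrite hgi /g /gi mulmxDl mul1mx -scalemxAr mul_delta_mx mulmxBr mulmx1.
  rewrite mulmxDl -!scalemxAl !mul_delta_mx.
  apply/matrixP => k l; rewrite !mxE; ring.
rewrite eq; apply: SD => //; first by exists h.
exact: (Soff hH M0 hP hmu hmu2).
Qed.

Lemma mxd_div (R : idomainType) (pi : R) n m (A : 'M[R]_n) :
  mxd pi m A -> exists Y, A = pi ^+ m *: Y.
Proof.
move=> hA.
have ex : forall i j, exists c, A i j == pi ^+ m * c.
  by move=> i j; have [c ->] := hA i j; exists c.
exists (\matrix_(i, j) xchoose (ex i j)).
by apply/matrixP => i j; rewrite !mxE; apply/eqP; apply: (xchooseP (ex i j)).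
Qed.

Lemma core (R : idomainType) (pi : R) n (H : 'M[R]_n.+1 -> Prop) M (mu : R) :
  pi != 0 ->
  normal_subgroup_SL H -> (0 < M)%N ->
  (forall A, SLmx A -> exists B, H B /\ mxd pi M (B - A)) ->
  mu \is a GRing.unit -> (mu ^+ 2 - 1) \is a GRing.unit ->
  forall X, SLmx X -> mxd pi M (X - 1%:M) -> exists h, H h /\ mxd pi M.+1 (h - X).
Proof.
move=> pi0 hH M0 hP hmu hmu2 X hX hX1.
have [Y hY] := mxd_div hX1.
have eX : X = 1%:M + pi ^+ M *: Y by rewrite -hY addrC subrK.
set l : 'I_n.+1 := ord_max.
set t := \tr Y.
set Y' := Y - t *: delta_mx l l.
pose T i j := if i == j then Y i i *: (delta_mx i i - delta_mx l l)
              else Y i j *: delta_mx i j.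
have eY' : Y' = \sum_i \sum_j T i j.
  have eT : forall i j, T i j = Y i j *: delta_mx i j -
      (if i == j then Y i i *: delta_mx l l else 0).
    move=> i j; rewrite /T; case: (i =P j) => [e|_]; first by subst; rewrite scalerBr.
    by rewrite subr0.
  under eq_bigr => i _ do under eq_bigr => j _ do rewrite eT.
  under eq_bigr => i _ do rewrite sumrB.
  rewrite sumrB -matrix_sum_delta /Y' /t /mxtrace scaler_suml.
  congr (_ - _); apply: eq_bigr => i _.
  rewrite (bigD1 i) //= eqxx big1 ?addr0 // => j hj.
  by rewrite eq_sym (negbTE hj).
have SY' : Sset pi H M Y'.
  rewrite eY'; apply: Ssum => // i _; apply: Ssum => // j _.
  rewrite /T; case: (i =P j) => [e|hij].
    subst j; case: (i =P l) => [e|hil]; first by subst; rewrite subrr scaler0; apply: S0.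
    by apply: (Sdiag hH M0 hP hmu hmu2); apply/eqP.
  by apply: (Soff hH M0 hP hmu hmu2); apply/eqP.
have [h [Hh eh]] := SY'.
have Sh : SLmx h by case: hH => hSL _ _ _ _; apply: hSL.
have hi := inv_approx M0 Sh eh.
set W := invmx h *m X.
have SW : SLmx W by apply: SL_mul => //; apply: SL_inv.
have eW : mxd pi M.+1 (W - (1%:M + (pi ^+ M * t) *: delta_mx l l)).
  apply: (@mxc_trans _ _ _ _ _ ((1%:M - pi ^+ M *: Y') *m (1%:M + pi ^+ M *: Y))).
    by rewrite /W eX; apply: mxc_mul => //; rewrite subrr; apply: mxd0.
  have -> : (1%:M - pi ^+ M *: Y') *m (1%:M + pi ^+ M *: Y) -
     (1%:M + (pi ^+ M * t) *: delta_mx l l) = - ((pi ^+ M *: Y') *m (pi ^+ M *: Y)).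
    rewrite mulmxBl !mulmxDr !mul1mx !mulmx1 /Y'.
    set P := (pi ^+ M *: (Y - t *: delta_mx l l)) *m (pi ^+ M *: Y); clearbody P.
    apply/matrixP => i j; rewrite !mxE; ring.
  apply: mxdN; apply: (@mxdW _ _ _ (M + M)); first by rewrite -addn1 leq_add2l.
  by apply: mxdMM; apply: mxdX.
have hd := det_cong eW.
rewrite det_diag1 (eqP SW) in hd.
have ht : pdvd pi 1 t.
  have : pdvd pi M.+1 (pi ^+ M * t).
    by have := pdvdN hd; rewrite opprB addrC addKr.
  move=> [c hc]; exists c; apply: (mulfI (expf_neq0 M pi0)).
  by rewrite hc exprS expr1 mulrA (mulrC (pi ^+ M)).
have SY : Sset pi H M Y.
  apply: (Scong SY'); have -> : Y - Y' = t *: delta_mx l l.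
    by rewrite /Y' opprB addrC subrK.
  by move=> i j; rewrite mxE; apply: pdvdMr.
have [h' [Hh' e']] := SY.
by exists h'; split => //; rewrite eX.
Qed.

Lemma exists_mu (k : finFieldType) : (3 < #|k|)%N ->
  exists x : k, (x != 0) && (x ^+ 2 != 1).
Proof.
move=> hk.
have [/existsP //|/existsPn hn] := boolP [exists x : k, (x != 0) && (x ^+ 2 != 1)].
exfalso.
have : (#|k| <= 3)%N.
  apply: (leq_trans _ (card_size [:: 0; 1; -1])).
  apply: subset_leq_card; apply/subsetP => x _.
  have := hn x; rewrite negb_and !negbK sqrf_eq1 !inE.
  by case/orP => [->|/orP [->|->]]; rewrite ?orbT.
by rewrite leqNgt hk.
Qed.

Theorem mainTheorem15
  (R : idomainType) (pi : R)
  (hdvr : DVR_uniformizer pi) (hcomp : padic_complete pi)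
  (k : finFieldType) (red : {rmorphism R -> k})
  (hred_surj : forall y : k, exists x : R, red x = y)
  (hred_ker : forall x : R, red x = 0 <-> pdvd pi 1 x)
  (heqchar : [pchar R] =i [pchar k])
  (hk : (9 < #|k|)%N)
  (n : nat) (hn : (2 <= n)%N)
  (H : 'M[R]_n -> Prop)
  (hH : normal_subgroup_SL H) (hHcl : SL_closed pi H)
  (hsurj : forall B : 'M[k]_n, \det B = 1 ->
             exists A : 'M[R]_n, H A /\ map_mx red A = B) :
  forall A : 'M[R]_n, SLmx A -> H A.
Proof.
case: hdvr => pi0 pinu hfac.
have unit_red : forall x, red x != 0 -> x \is a GRing.unit.
  move=> x hx.
  have x0 : x != 0 by apply: contraNneq hx => ->; rewrite rmorph0.
  have [m [u [hu ex]]] := hfac x x0.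
  case: m ex => [|m] ex; first by rewrite ex expr0 mulr1.
  exfalso; move/eqP: hx; apply; apply/hred_ker.
  by exists (u * pi ^+ m); rewrite ex exprS; ring.
have [x /andP [x0 x2]] := exists_mu (leq_trans (isT : (3 < 10)%N) hk).
have [mu hmu] := hred_surj x.
have mu_u : mu \is a GRing.unit by apply: unit_red; rewrite hmu.
have mu2_u : (mu ^+ 2 - 1) \is a GRing.unit.
  by apply: unit_red; rewrite rmorphB rmorphXn rmorph1 hmu subr_eq0.
case: n hn H hH hHcl hsurj => [//|n] _ H hH hHcl hsurj.
have P1 : forall A, SLmx A -> exists B, H B /\ mxd pi 1 (B - A).
  move=> A hA.
  have hdet : \det (map_mx red A) = 1 by rewrite det_map_mx (eqP hA) rmorph1.
  have [B [HB eB]] := hsurj _ hdet.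
  exists B; split => // i j; apply/hred_ker.
  rewrite !mxE rmorphB.
  have := congr1 (fun M0 : 'M[k]_n.+1 => M0 i j) eB; rewrite /= !mxE => ->.
  by rewrite subrr.
have PM : forall M, (0 < M)%N -> forall A, SLmx A -> exists B, H B /\ mxd pi M (B - A).
  elim=> [//|M IH] _.
  case: M IH => [_|M IH]; first exact: P1.
  have hPM := IH isT.
  move=> A hA.
  have [B [HB eB]] := hPM A hA.
  case: hH => hSL h1 hmul hinv hconj.
  have SB := hSL B HB.
  have SX : SLmx (invmx B *m A) by apply: SL_mul => //; apply: SL_inv.
  have hX : mxd pi M.+1 (invmx B *m A - 1%:M).
    have -> : invmx B *m A - 1%:M = invmx B *m (A - B).
      by rewrite mulmxBr mulVmx ?SL_unit.
    by apply: mxdMl; have := mxdN eB; rewrite opprB.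
  have [h [Hh eh]] := core pi0 (And5 hSL h1 hmul hinv hconj) (ltn0Sn M) hPM mu_u mu2_u SX hX.
  exists (B *m h); split; first by apply: hmul.
  have -> : B *m h - A = B *m (h - invmx B *m A).
    by rewrite mulmxBr mulmxA mulmxV ?SL_unit // mul1mx.
  by apply: mxdMl.
move=> A hA; apply: hHcl => // m.
case: m => [|m].
  case: hH => _ h1 _ _ _; exists 1%:M; split => // i j.
  by exists (1%:M i j - A i j); rewrite expr0 mul1r.
have [B [HB eB]] := PM m.+1 isT A hA.
by exists B; split => // i j; have := eB i j; rewrite !mxE.
Qed.
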